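(* Let $\Bbbk$ be a field, $S=\Bbbk[x_1,x_2,x_3]$, let $d\geq 5$ with $d\neq 6$, and let $I=(x_1^d,x_2^d,x_3^d,x_1^{\lfloor d/2\rfloor}x_2^{\lceil d/2\rceil})$. Then $$\mathrm{HF}\left(S/I, \left\lfloor\tfrac{3d-3}{2}\right\rfloor -1 \right)>\mathrm{HF}\left(S/I,\left\lfloor\tfrac{3d-3}{2}\right\rfloor \right).$$
   Context: $\mathrm{HF}(A,k)=\dim_\Bbbk A_k$ denotes the Hilbert function of the graded algebra $A$. *)

(* Defs.v *)
From mathcomp Require Import all_boot all_algebra.
From mathcomp Require Import mpoly.
Set Implicit Arguments. Unset Strict Implicit. Unset Printing Implicit Defensive.
Import GRing.Theory.
Local Open Scope ring_scope.

(* S = F[x_1,x_2,x_3] is {mpoly F[3]}; variables x_1,x_2,x_3 are 'X_0,'X_1,'X_2. *)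

Definition in_ideal (F : fieldType) (gs : seq {mpoly F[3]}) (p : {mpoly F[3]}) : Prop :=
  exists qs : seq {mpoly F[3]}, size qs = size gs /\
    p = \sum_(i < size gs) qs`_i * gs`_i.

Definition indep_mod (F : fieldType) (gs : seq {mpoly F[3]}) (k : nat)
    (ps : seq {mpoly F[3]}) : Prop :=
  all (fun p => p \is [in F[3], k.-homog]) ps /\
  forall cs : seq F, size cs = size ps ->
    in_ideal gs (\sum_(i < size ps) cs`_i *: ps`_i) ->
    all (fun c => c == 0) cs.

(* HF(S/(gs), k) = n : dim_F of the degree-k component of S/(gs) is n,
   i.e. n is the maximal size of a family in S_k independent modulo the ideal. *)
Definition HF_is (F : fieldType) (gs : seq {mpoly F[3]}) (k n : nat) : Prop :=
  (exists ps, size ps = n /\ indep_mod gs k ps) /\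
  (forall ps, indep_mod gs k ps -> (size ps <= n)%N).

Definition gensI (F : fieldType) (d : nat) : seq {mpoly F[3]} :=
  [:: 'X_0 ^+ d; 'X_1 ^+ d; 'X_2 ^+ d; 'X_0 ^+ d./2 * 'X_1 ^+ uphalf d].

(* Main.v *)
Require Import Defs.
From mathcomp Require Import all_boot all_algebra.
From mathcomp Require Import mpoly.
From mathcomp Require Import zify.
Set Implicit Arguments. Unset Strict Implicit. Unset Printing Implicit Defensive.
Import GRing.Theory.
Local Open Scope ring_scope.

Section Gen.
Variable F : fieldType.
Variable E : seq 'X_{1..3}.
Local Notation gs := (map (fun e => 'X_[F, e]) E).

Lemma coefMX_out (q : {mpoly F[3]}) e m : ~~ (e <= m)%MM -> (q * 'X_[e])@_m = 0.
Proof.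
move=> nle; apply: memN_msupp_eq0; apply/negP => hm.
have := perm_mem (msuppMX q e) m; rewrite hm => /esym/mapP[m' _ em].
by move: nle; rewrite em lem_addr.
Qed.

Lemma ideal_coef0 p m : in_ideal gs p ->
  (forall e, e \in E -> ~~ (e <= m)%MM) -> p@_m = 0.
Proof.
case=> qs [_ ->] H; rewrite raddf_sum /= big1 // => i _.
have hi : (i < size E)%N by rewrite -(size_map (fun e => 'X_[F, e])).
rewrite (nth_map 0%MM) //; apply: coefMX_out; apply: H; exact: mem_nth.
Qed.

Lemma ideal_of_supp p :
  (forall m, m \in msupp p -> has (fun e => e <= m)%MM E) -> in_ideal gs p.
Proof.
move=> H.
pose j m := find (fun e => (e <= m)%MM) E.
exists [seq \sum_(m <- msupp p | j m == i) p@_m *: 'X_[m - nth 0%MM E i]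
         | i <- iota 0 (size E)].
split; first by rewrite !size_map size_iota.
rewrite [LHS]mpolyE.
have -> : size gs = size E by rewrite size_map.
transitivity (\sum_(i < size E) \sum_(m <- msupp p)
   (if j m == i then p@_m *: 'X_[m] else 0)).
  rewrite exchange_big /=; apply: eq_big_seq => m hm /=.
  have hj : (j m < size E)%N by rewrite -has_find; apply: H.
  rewrite (bigD1 (Ordinal hj)) //= eqxx big1 ?addr0 // => i.
  by rewrite -val_eqE /= eq_sym => /negbTE ->.
apply: eq_bigr => i _.
rewrite (nth_map 0%MM) ?size_map // (nth_map 0%N) ?size_iota //.
rewrite nth_iota // add0n mulr_suml [RHS]big_mkcond /=.
apply: eq_big_seq => m hm; case: eqP => // hji.
rewrite -scalerAl -mpolyXD submK //.
have hj : (j m < size E)%N by rewrite -has_find; apply: H.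
by rewrite -hji; exact: (nth_find 0%MM (H m hm)).
Qed.

Lemma indep_le (S : seq 'X_{1..3}) t ps :
  (forall m, mdeg m = t -> m \notin S -> has (fun e => e <= m)%MM E) ->
  indep_mod gs t ps -> (size ps <= size S)%N.
Proof.
move=> Hcov [Hh Hind]; rewrite leqNgt; apply/negP => Hlt.
pose A : 'M[F]_(size ps, size S) := \matrix_(i, j) (ps`_i)@_(nth 0%MM S j).
have KA : kermx A != 0.
  rewrite kermx_eq0 /row_free neq_ltn; apply/orP; left.
  exact: leq_ltn_trans (rank_leq_col A) Hlt.
have [i0 hi0] : exists i0, row i0 (kermx A) != 0.
  apply/existsP; apply: contraNT KA => /existsPn Hn.
  apply/eqP/matrixP => i j; have := Hn i; rewrite negbK => /eqP/rowP/(_ j).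
  by rewrite !mxE.
set v := row i0 (kermx A).
have vA0 : v *m A = 0 by rewrite -row_mul mulmx_ker row0.
pose cs := [seq v 0 i | i <- enum 'I_(size ps)].
have hcs : forall i : 'I_(size ps), cs`_i = v 0 i.
  by move=> i; rewrite (nth_map i) ?size_enum_ord // nth_ord_enum.
have szcs : size cs = size ps by rewrite size_map size_enum_ord.
have := Hind cs szcs.
have Hid : in_ideal gs (\sum_(i < size ps) cs`_i *: ps`_i).
  apply: ideal_of_supp => m; rewrite mcoeff_msupp.
  have -> : (\sum_(i < size ps) cs`_i *: ps`_i)@_m = \sum_i v 0 i * (ps`_i)@_m.
    by rewrite raddf_sum; apply: eq_bigr => i _; rewrite /= mcoeffZ hcs.
  case: (eqVneq (mdeg m) t) => [hdeg|hdeg]; last first.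
    rewrite big1 ?eqxx // => i _.
    rewrite (dhomog_nemf_coeff (allP Hh _ (mem_nth 0 (ltn_ord i))) hdeg).
    by rewrite mulr0.
  case: (boolP (m \in S)) => hmS nz; last exact: Hcov.
  exfalso; move/eqP: nz; apply.
  have hj : (index m S < size S)%N by rewrite index_mem.
  have := congr1 (fun M : 'M[F]_(1, size S) => M 0 (Ordinal hj)) vA0.
  rewrite !mxE => H0; apply: (etrans _ H0).
  by apply: eq_bigr => i _; rewrite /A !mxE /= nth_index.
move=> /(_ Hid) /(all_nthP 0) Hz; apply: (negP hi0); apply/eqP/rowP => j.
rewrite [RHS]mxE -hcs; apply/eqP; apply: Hz; by rewrite szcs.
Qed.

Lemma indep_S (S : seq 'X_{1..3}) t : uniq S ->
  (forall m, m \in S -> mdeg m = t) ->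
  (forall m e, m \in S -> e \in E -> ~~ (e <= m)%MM) ->
  indep_mod gs t (map (fun m => 'X_[F, m]) S).
Proof.
move=> uS Hdeg Hstd; split.
  by apply/allP => p /mapP[m mS ->]; rewrite dhomogX; apply/eqP; apply: Hdeg.
move=> cs Hsz Hid; apply/(all_nthP 0) => j Hj.
have HjS : (j < size S)%N by rewrite Hsz size_map in Hj.
have := ideal_coef0 Hid (fun e => Hstd _ e (mem_nth 0%MM HjS)).
have HjP : (j < size (map (fun m => 'X_[F, m]) S))%N by rewrite size_map.
rewrite raddf_sum /= (bigD1 (Ordinal HjP)) //=.
rewrite big1 ?addr0.
  by rewrite mcoeffZ (nth_map 0%MM) // mcoeffX eqxx mulr1 => ->.
move=> i /negbTE hij; rewrite mcoeffZ (nth_map 0%MM) ?mcoeffX; last first.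
  by rewrite -(size_map (fun m => 'X_[F, m])).
rewrite nth_uniq //; last by rewrite -(size_map (fun m => 'X_[F, m])).
by rewrite -val_eqE /= in hij; rewrite hij mulr0.
Qed.

Lemma HF_of (S : seq 'X_{1..3}) t : uniq S ->
  (forall m, m \in S -> mdeg m = t) ->
  (forall m e, m \in S -> e \in E -> ~~ (e <= m)%MM) ->
  (forall m, mdeg m = t -> m \notin S -> has (fun e => e <= m)%MM E) ->
  HF_is gs t (size S).
Proof.
move=> uS Hdeg Hstd Hcov; split.
  by exists (map (fun m => 'X_[F, m]) S); rewrite size_map; split => //; exact: indep_S.
by move=> ps; exact: indep_le.
Qed.

End Gen.

Local Notation i0 := (0%R : 'I_3).
Local Notation i1 := (1%R : 'I_3).
Local Notation i2 := (2%R : 'I_3).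

Definition Ed (d : nat) : seq 'X_{1..3} :=
  [:: (U_(i0) *+ d)%MM; (U_(i1) *+ d)%MM; (U_(i2) *+ d)%MM;
      (U_(i0) *+ d./2 + U_(i1) *+ uphalf d)%MM].

Lemma gensE (F : fieldType) d : gensI F d = map (fun e => 'X_[F, e]) (Ed d).
Proof. by rewrite /gensI /= !mpolyXn -mpolyXD. Qed.

Lemma ord3P (P : 'I_3 -> Prop) : P i0 -> P i1 -> P i2 -> forall i, P i.
Proof.
move=> H0 H1 H2 [[|[|[|i]]] Hi] //.
- by have -> : Ordinal Hi = i0 by apply/val_inj.
- by have -> : Ordinal Hi = i1 by apply/val_inj.
- by have -> : Ordinal Hi = i2 by apply/val_inj.
Qed.

Lemma mdeg3 (m : 'X_{1..3}) : mdeg m = (m i0 + m i1 + m i2)%N.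
Proof.
rewrite mdegE !big_ord_recr big_ord0 /= add0n.
by congr (_ + _ + _)%N; congr (m _); apply/val_inj.
Qed.

Lemma leU (j : 'I_3) k (m : 'X_{1..3}) : (U_(j) *+ k <= m)%MM = (k <= m j)%N.
Proof.
apply/mnm_lepP/idP => [/(_ j)|H i]; first by rewrite mulmnE mnm1E eqxx mul1n.
rewrite mulmnE mnm1E; case: eqP => [<-|_]; by rewrite ?mul1n ?mul0n.
Qed.

Lemma le4 a b (m : 'X_{1..3}) :
  (U_(i0) *+ a + U_(i1) *+ b <= m)%MM = (a <= m i0)%N && (b <= m i1)%N.
Proof.
apply/mnm_lepP/andP => [H|[Ha Hb]].
  by split; [have := H i0|have := H i1]; rewrite mnmDE !mulmnE !mnm1E /= ?mul1n ?mul0n ?addn0.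
by apply: ord3P; rewrite mnmDE !mulmnE !mnm1E /= ?mul1n ?mul0n ?addn0.
Qed.

Definition mk (a b c : nat) : 'X_{1..3} := [multinom nth 0%N [:: a; b; c] i | i < 3].

Lemma mk0 a b c : mk a b c i0 = a. Proof. by rewrite mnmE. Qed.
Lemma mk1 a b c : mk a b c i1 = b. Proof. by rewrite mnmE. Qed.
Lemma mk2 a b c : mk a b c i2 = c. Proof. by rewrite mnmE. Qed.

Definition okp (d t : nat) (ab : nat * nat) : bool :=
  [&& (ab.1 + ab.2 <= t)%N, (t - ab.1 - ab.2 < d)%N &
      ~~ ((d./2 <= ab.1)%N && (uphalf d <= ab.2)%N)].

Definition L (d t : nat) : seq (nat * nat) :=
  [seq ab <- [seq (a, b) | a <- iota 0 d, b <- iota 0 d] | okp d t ab].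

Definition Sd (d t : nat) : seq 'X_{1..3} :=
  [seq mk ab.1 ab.2 (t - ab.1 - ab.2) | ab <- L d t].

Lemma memL d t a b : ((a, b) \in L d t) = [&& (a < d)%N, (b < d)%N & okp d t (a, b)].
Proof.
rewrite mem_filter andbC andbA; congr (_ && _).
apply/allpairsP/andP => [[[x y] [/= hx hy [-> ->]]]|[ha hb]].
  by rewrite !mem_iota /= in hx hy.
by exists (a, b); rewrite !mem_iota /=.
Qed.

Lemma uniqL d t : uniq (L d t).
Proof.
apply: filter_uniq; apply: allpairs_uniq; try exact: iota_uniq.
by move=> [x y] [x' y'] _ _.
Qed.

Lemma memS d t m : m \in Sd d t ->
  exists a b, [/\ (a < d)%N, (b < d)%N, okp d t (a, b) & m = mk a b (t - a - b)].
Proof.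
by case/mapP => [[a b]]; rewrite memL => /and3P[ha hb hok] ->; exists a, b.
Qed.

Lemma HF_Sd (F : fieldType) d t : (2 <= d)%N ->
  HF_is (gensI F d) t (size (Sd d t)).
Proof.
move=> d2; rewrite gensE; apply: HF_of.
- rewrite map_inj_in_uniq ?uniqL // => [[a b]] [a' b'] _ _ /= H.
  by have := congr1 (fun m : 'X_{1..3} => m i0) H; have := congr1 (fun m : 'X_{1..3} => m i1) H;
     rewrite !mk0 !mk1 => -> ->.
- move=> m /memS [a [b [ha hb hok ->]]]; rewrite mdeg3 mk0 mk1 mk2.
  by move: hok; rewrite /okp /=; lia.
- move=> m e /memS [a [b [ha hb hok ->]]]; rewrite !inE.
  move: hok; rewrite /okp /= => hok.
  by case/or4P => /eqP ->; rewrite ?leU ?le4 ?mk0 ?mk1 ?mk2; lia.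
- move=> m hdeg; apply: contraR => hn; rewrite /= !leU le4 in hn.
  apply/mapP; exists (m i0, m i1).
    rewrite memL /okp /=; rewrite mdeg3 in hdeg; lia.
  apply/mnmP; apply: ord3P; rewrite ?mk0 ?mk1 ?mk2 //=.
  rewrite mdeg3 in hdeg; lia.
Qed.

Lemma memL' d t a b : ((a, b) \in L d t) = [&& (a < d)%N, (b < d)%N, (a + b <= t)%N, (t < d + (a + b))%N &
      ~~ ((d./2 <= a)%N && (uphalf d <= b)%N)].
Proof. rewrite memL /okp /=; congr [&& _, _, _ & _]; rewrite -subnDA; lia. Qed.

Lemma Lcomb d : (5 <= d)%N -> d <> 6%N ->
  (size (L d ((3 * d - 3)./2)) < size (L d ((3 * d - 3)./2).-1))%N.
Proof.
move=> H5 H6; set k := (3 * d - 3)./2.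
have P : exists m, (d = 2 * m /\ d./2 = m /\ uphalf d = m /\ k = 3 * m-2)%N \/
                   (d = 2 * m+1 /\ d./2 = m /\ uphalf d = m+1 /\ k = 3 * m)%N.
  have Hh := odd_double_half d; have Hk := odd_double_half (3 * d - 3).
  rewrite -/k -!muln2 in Hh Hk.
  have o3 : (odd (3 * d - 3) + odd d = 1)%N.
    have -> : (3 * d - 3 = 3 * (d - 1))%N by rewrite mulnBr muln1.
    rewrite oddM /=; case: d H5 {Hh Hk H6 k} => [//|d' _].
    rewrite subn1 /=; by case: odd.
  exists d./2; rewrite uphalf_half.
  move: Hh o3; case: (odd d) => /= Hh o3; [right|left]; lia.
case: P => m P.
pose g (ab : nat * nat) := if (ab.1 + ab.2 < k)%N then ab
   else (nat_of_bool (ab.1 < d./2)%N, (k - d - (ab.1 < d./2)%N)%N).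
pose w := ((k - d)%N, 0%N).
have sub : {subset w :: map g (L d k) <= L d k.-1}.
  move=> x; rewrite inE => /orP[/eqP->|/mapP[[a b] hab ->]].
    rewrite memL'; lia.
  rewrite memL' in hab; rewrite /g /=.
  case: ifP => hc; case: (ltnP a d./2) => ha; rewrite memL' /=; lia.
have inj : {in L d k &, injective g}.
  move=> [a b] [a' b']; rewrite !memL' => ha hb.
  rewrite /g /=; case: ifP => hc; case: ifP => hc'; case: (ltnP a d./2) => h1;
    case: (ltnP a' d./2) => h2;
    move=> /pair_equal_spec [E1 E2]; apply/pair_equal_spec; lia.
have U : uniq (w :: map g (L d k)).
  rewrite /= (map_inj_in_uniq inj) uniqL andbT.
  apply/mapP => -[[a b] hab]; rewrite memL' in hab; rewrite /g /=.
  case: ifP => hc; case: (ltnP a d./2) => ha; move=> /pair_equal_spec [E1 E2]; lia.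
by have := uniq_leq_size U sub; rewrite /= size_map.
Qed.

Theorem lemma5p7 (F : fieldType) (d : nat) :
  (5 <= d)%N -> d <> 6%N ->
  exists a b : nat,
    HF_is (gensI F d) ((3 * d - 3)./2).-1 a /\
    HF_is (gensI F d) ((3 * d - 3)./2) b /\
    (b < a)%N.
Proof.
move=> H5 H6; exists (size (Sd d ((3 * d - 3)./2).-1)), (size (Sd d ((3 * d - 3)./2))).
have d2 : (2 <= d)%N by apply: leq_trans H5.
split; first exact: HF_Sd.
split; first exact: HF_Sd.
by rewrite !size_map; exact: Lcomb.
Qed.
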